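(* Let $g(\alpha,\beta,\gamma)=\gamma^{3/2}+\min\big(0.465,\frac{3\alpha\beta}{\alpha+\beta},3\alpha\sqrt\beta\big)$, where $\frac{\alpha\beta}{\alpha+\beta}:=0$ if $(\alpha,\beta)=(0,0)$, and $f(\alpha,\beta,\gamma,\delta)=\min\big(2\delta^{3/2}+g(\alpha,\beta,\gamma),\tfrac14+\tfrac34g(\alpha,\beta,\gamma)\big)$. If $\alpha,\beta,\gamma,\delta$ are nonnegative real numbers with $2\alpha+\beta+\gamma+2\delta=1$ and $\gamma\le\alpha$, then $f(\alpha,\beta,\gamma,\delta)\le\frac12$, with equality if and only if $(\alpha,\beta,\gamma,\delta)=(\frac14,\frac14,\frac14,0)$. *)

(* Defs.v *)
From Stdlib Require Import Reals.
Open Scope R_scope.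

(* x^{3/2} for x >= 0, written as x * sqrt x (only used at nonnegative x). *)
Definition pow32 (x : R) : R := x * sqrt x.

Definition hmean (a b : R) : R :=
  if Req_EM_T (a + b) 0 then 0 else a * b / (a + b).

Definition gfun (a b c : R) : R :=
  pow32 c + Rmin 0.465 (Rmin (3 * hmean a b) (3 * a * sqrt b)).

Definition ffun (a b c d : R) : R :=
  Rmin (2 * pow32 d + gfun a b c) (1/4 + 3/4 * gfun a b c).

(* Main.v *)
Require Import Defs.
From Stdlib Require Import Reals Lra Psatz.
Open Scope R_scope.

Lemma pow_eq_0 (x : R) (n : nat) : x ^ n = 0 -> x = 0.
Proof. intro H. destruct (Req_dec x 0) as [E|E]; [exact E|]. exfalso. exact (pow_nonzero x n E H). Qed.

Lemma L_QA (u w : R) : 0 <= u -> 0 <= w -> 1-w <= u -> u <= w -> 3*u^2 + w^2 <= 1 ->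
  0 <= 1 - 2*u^3 - 3*w*(1 - w^2 - u^2) /\
  (1 - 2*u^3 - 3*w*(1 - w^2 - u^2) = 0 -> u = 1/2 /\ w = 1/2).
Proof.
  intros Hu Hw H1 H2 H3.
  set (Phi := 3*w*(u+(1-w)) - 2*(u^2+u*(1-w)+(1-w)^2)).
  assert (HP : 0 <= Phi) by (unfold Phi; nra).
  assert (Hid : 1 - 2*u^3 - 3*w*(1 - w^2 - u^2) = (u-(1-w))*Phi + (2*w-1)^3) by (unfold Phi; ring).
  assert (Hw2 : 1/2 <= w) by lra.
  assert (A1 : 0 <= (u-(1-w))*Phi) by (apply Rmult_le_pos; lra).
  assert (A2 : 0 <= (2*w-1)^3) by (apply pow_le; lra).
  rewrite Hid. split. lra.
  intro E. assert (E2 : (2*w-1)^3 = 0) by lra.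
  assert (w = 1/2).
  { apply pow_eq_0 in E2. lra. }
  lra.
Qed.

Lemma L_Esq (t w : R) : 0 <= t -> 0 <= w -> 3*t^2 + w^2 = 1 ->
  0 <= 1 - 2*t^3 - 6*w*t^2 /\ (1 - 2*t^3 - 6*w*t^2 = 0 -> t = 1/2).
Proof.
  intros Ht Hw H.
  assert (Ht0 : t^2 <= 1/3) by nra.
  assert (Ht1 : t <= 6/10) by nra.
  assert (Hpos : 0 < 1 - 2*t^3) by nra.
  assert (Hsq : (1 - 2*t^3)^2 - (6*w*t^2)^2 = (2*t-1)^2 * (1 + 4*t + 12*t^2 + 28*t^3 + 28*t^4)).
  { assert (w^2 = 1 - 3*t^2) by lra.
    replace ((6*w*t^2)^2) with (36*t^4*w^2) by ring. rewrite H0. ring. }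
  assert (Hq : 0 < 1 + 4*t + 12*t^2 + 28*t^3 + 28*t^4) by nra.
  assert (Hge : 0 <= (1 - 2*t^3)^2 - (6*w*t^2)^2) by (rewrite Hsq; apply Rmult_le_pos; [apply pow2_ge_0 | lra]).
  assert (Hr : 0 <= 6*w*t^2) by (apply Rmult_le_pos; nra).
  split.
  - nra.
  - intro E. assert (E2 : (1 - 2*t^3)^2 - (6*w*t^2)^2 = 0) by (replace (6*w*t^2) with (1-2*t^3) by lra; ring).
    rewrite Hsq in E2. apply Rmult_integral in E2. destruct E2 as [E2|E2]; [|lra].
    apply pow_eq_0 in E2. lra.
Qed.

Lemma L_QB (u w t : R) : 0 <= u -> 0 <= w -> 0 <= t -> w <= u -> u <= t -> 3*t^2 + w^2 = 1 ->
  0 <= 1 - 2*u^3 - 3*w*(1 - w^2 - u^2) /\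
  (1 - 2*u^3 - 3*w*(1 - w^2 - u^2) = 0 -> u = 1/2 /\ w = 1/2).
Proof.
  intros Hu Hw Ht H1 H2 H3.
  destruct (L_Esq t w Ht Hw H3) as [E1 E2].
  set (Phi := 2*(u^2+u*t+t^2) - 3*w*(u+t)).
  assert (HP : 0 <= Phi) by (unfold Phi; nra).
  assert (Hid : 1 - 2*u^3 - 3*w*(1 - w^2 - u^2) = (t-u)*Phi + (1 - 2*t^3 - 6*w*t^2)).
  { unfold Phi. assert (w^2 = 1 - 3*t^2) by lra. 
    replace (3*w*(1 - w^2 - u^2)) with (3*w*(3*t^2 - u^2)) by (rewrite H; ring). ring. }
  assert (A1 : 0 <= (t-u)*Phi) by (apply Rmult_le_pos; lra).
  rewrite Hid. split. lra.
  intro E. assert (Et : 1 - 2*t^3 - 6*w*t^2 = 0) by lra.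
  apply E2 in Et. subst t.
  assert (w = 1/2) by nra.
  lra.
Qed.
Definition PH (u w : R) := (1/2 - u^3)*(1 + w^2 - u^2)/2 - 3*w^2*(1 - w^2 - u^2)/2.

Lemma L_HA (u w : R) : 43/100 <= u -> 1/2 <= w -> u <= 1 - w ->
  0 <= PH u w /\ (PH u w = 0 -> u = 1/2 /\ w = 1/2).
Proof. intros H1 H2 H3.
  set (Q := (1/2)*u^4 - (1/2)*u^3*w + (1/2)*u^3 - 1*u^2*w + (5/2)*u*w^2 - 1*u*w - (1/4)*u - (5/2)*w^3 + (7/2)*w^2 - (3/4)*w - (1/4)).
  assert (HQ : Q <= -1/1000).
  { unfold Q. assert (Hu1: u <= 1/2) by lra. assert (Hw1 : w <= 57/100) by lra.
    assert (0 <= (u-43/100)*(w-1/2)) by nra.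
    assert (0 <= (1/2-u)*(57/100-w)) by nra.
    assert (0 <= (u-43/100)*(57/100-w)) by nra.
    assert (0 <= (1/2-u)*(w-1/2)) by nra.
    nra. }
  assert (Hid : PH u w = (u - (1-w))*Q + w*(2*w-1)^3/2) by (unfold PH, Q; field).
  assert (A1 : 0 <= (u - (1-w))*Q) by nra.
  assert (A2 : 0 <= w*(2*w-1)^3/2).
  { apply Rmult_le_pos; [|lra]. apply Rmult_le_pos; [lra|]. apply pow_le; lra. }
  rewrite Hid; split; [lra|]. intro E.
  assert (E1 : w*(2*w-1)^3 = 0) by lra.
  apply Rmult_integral in E1. destruct E1 as [E1|E1]; [lra|].
  apply pow_eq_0 in E1.
  assert (E3 : (u - (1-w))*Q = 0) by lra.
  apply Rmult_integral in E3. destruct E3; lra.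
Qed.

Lemma L_HB (u w t : R) : 1/2 <= t -> 0 <= w -> 3*t^2 + w^2 = 1 -> 43/100 <= u -> u <= t ->
  0 <= PH u w /\ (PH u w = 0 -> u = 1/2 /\ w = 1/2).
Proof. intros H1 H2 H3 H4 H5.
  set (RR := (1/2)*u^4 + (1/2)*u^3*t + 2*u^2*t^2 - 1*u^2 + 2*u*t^3 - (9/2)*u*t^2 - 1*u*t + (5/4)*u + 2*t^4 - (9/2)*t^3 - 1*t^2 + (5/4)*t).
  assert (Ht2 : t <= 58/100) by nra.
  assert (HR : RR <= -1/20).
  { unfold RR.
    assert (0 <= (u-43/100)*(t-1/2)) by nra.
    assert (0 <= (58/100-u)*(58/100-t)) by nra.
    assert (0 <= (u-43/100)*(58/100-t)) by nra.
    assert (0 <= (58/100-u)*(t-1/2)) by nra.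
    nra. }
  set (q := 2*t^4 + 10*t^3 + 4*t^2 - 2*t - 1).
  assert (Hq : 0 < q) by (unfold q; nra).
  assert (Hid : PH u w = (u - t)*RR + (t - 1/2)*q).
  { unfold PH, RR, q. assert (w^2 = 1 - 3*t^2) by lra.
    replace (w^4) with ((w^2)^2) by ring. rewrite H. field. }
  assert (A1 : 0 <= (u - t)*RR) by nra.
  assert (A2 : 0 <= (t - 1/2)*q) by nra.
  rewrite Hid; split; [lra|]. intro E.
  assert (E1 : (t - 1/2)*q = 0) by lra.
  apply Rmult_integral in E1. destruct E1 as [E1|E1]; [|lra].
  assert (E3 : (u - t)*RR = 0) by lra.
  apply Rmult_integral in E3. destruct E3 as [E3|E3]; [|lra].
  split; [lra|]. nra.
Qed.


Lemma L_step2 (u : R) : 28/100 <= u -> u <= 43/100 -> u^3 + 5148/10000*(1-u^2) < 1/2.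
Proof. intros. assert (0 <= (u-28/100)*(43/100-u)) by nra. nra. Qed.

Lemma hm_bound (a b : R) : 0 <= a -> 0 <= b -> 3 * hmean a b <= 5148/10000*(2*a+b).
Proof. intros Ha Hb. unfold hmean. destruct (Req_EM_T (a+b) 0) as [E|E]. lra.
  assert (Hp : 0 < a + b) by lra.
  assert (H1 : 3*a*b <= 5148/10000*(2*a+b)*(a+b)) by (pose proof (pow2_ge_0 (a - 7069/10000*b)); nra).
  replace (3 * (a*b/(a+b))) with (3*a*b/(a+b)) by (field; lra).
  apply (Rmult_le_reg_r (a+b)); [lra|].
  replace (3*a*b/(a+b)*(a+b)) with (3*a*b) by (field; lra). lra.
Qed.

Lemma hm_eq (a b : R) : 0 < a + b -> hmean a b = a*b/(a+b).
Proof. intro H. unfold hmean. destruct (Req_EM_T (a+b) 0); [lra|reflexivity]. Qed.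

Lemma core (a b c : R) : 0 <= a -> 0 <= b -> 0 <= c -> 2*a+b+c = 1 -> c <= a ->
  c * sqrt c + Rmin (3 * hmean a b) (3 * a * sqrt b) <= 5148/10000 /\
  (28/100 <= sqrt c ->
     c * sqrt c + Rmin (3 * hmean a b) (3 * a * sqrt b) <= 1/2 /\
     (c * sqrt c + Rmin (3 * hmean a b) (3 * a * sqrt b) = 1/2 -> a = 1/4 /\ b = 1/4 /\ c = 1/4)).
Proof.
  intros Ha Hb Hc Hsum Hca.
  set (u := sqrt c). set (w := sqrt b).
  assert (Hu : 0 <= u) by apply sqrt_pos.
  assert (Hw : 0 <= w) by apply sqrt_pos.
  assert (Hcu : c = u^2) by (unfold u; simpl; rewrite Rmult_1_r, sqrt_sqrt; lra).
  assert (Hbw : b = w^2) by (unfold w; simpl; rewrite Rmult_1_r, sqrt_sqrt; lra).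
  assert (Hpc : c * u = u^3) by (rewrite Hcu at 1; ring).
  rewrite Hpc.
  set (K := u^3 + Rmin (3 * hmean a b) (3 * a * w)).
  assert (HK1 : K <= u^3 + 3*hmean a b) by (unfold K; pose proof (Rmin_l (3 * hmean a b) (3 * a * w)); lra).
  assert (HK2 : K <= u^3 + 3*a*w) by (unfold K; pose proof (Rmin_r (3 * hmean a b) (3 * a * w)); lra).
  assert (Hhm := hm_bound a b Ha Hb).
  assert (Hu3 : 3*u^2 <= 1) by lra.
  destruct (Rle_lt_dec u (43/100)) as [Hsmall|Hbig].
  -
    assert (HK3 : K <= u^3 + 5148/10000*(1-u^2)) by lra.
    destruct (Rlt_le_dec u (28/100)) as [Hs2|Hs2].
    + split. assert (u^3 <= 5148/10000*u^2) by nra. lra.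
      intro; lra.
    + pose proof (L_step2 u Hs2 Hsmall). split. lra. intros _. split. lra. intro; lra.
  -
    assert (Ha' : a = (1 - w^2 - u^2)/2) by lra.
    assert (Hmain : K <= 1/2 /\ (K = 1/2 -> u = 1/2 /\ w = 1/2)).
    { destruct (Rle_lt_dec (a + b) w) as [HQ|HH].
      -
        assert (H1w : 1 - w <= u) by nra.
        assert (HD : 0 <= 1 - 2*u^3 - 3*w*(1 - w^2 - u^2) /\
                     (1 - 2*u^3 - 3*w*(1 - w^2 - u^2) = 0 -> u = 1/2 /\ w = 1/2)).
        { destruct (Rle_lt_dec u w) as [Huw|Huw].
          - apply L_QA; lra.
          - set (t := sqrt ((1 - w^2)/3)).
            assert (Ht : 0 <= t) by apply sqrt_pos.
            assert (Htt0 : t * t = (1 - w^2)/3) by (apply sqrt_sqrt; nra).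
            assert (Htt : 3*t^2 + w^2 = 1) by nra.
            apply (L_QB u w t); nra. }
        destruct HD as [HD1 HD2].
        assert (Hx : u^3 + 3*a*w = (1 - (1 - 2*u^3 - 3*w*(1 - w^2 - u^2)))/2) by (rewrite Ha'; field).
        split. lra. intro E. apply HD2. lra.
      -
        assert (H1w : u <= 1 - w) by nra.
        assert (Hab : 0 < a + b) by nra.
        rewrite (hm_eq a b Hab) in HK1.
        assert (HP : 0 <= PH u w /\ (PH u w = 0 -> u = 1/2 /\ w = 1/2)).
        { destruct (Rle_lt_dec (1/2) w) as [Hw2|Hw2].
          - apply L_HA; lra.
          - set (t := sqrt ((1 - w^2)/3)).
            assert (Ht : 0 <= t) by apply sqrt_pos.
            assert (Htt0 : t * t = (1 - w^2)/3) by (apply sqrt_sqrt; nra).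
            assert (Htt : 3*t^2 + w^2 = 1) by nra.
            apply (L_HB u w t); nra. }
        destruct HP as [HP1 HP2].
        assert (Hx : u^3 + 3*(a*b/(a+b)) = 1/2 - PH u w / (a+b)).
        { unfold PH. rewrite Hbw in *. rewrite Ha'. field. rewrite Ha' in Hab. lra. }
        assert (Hq : 0 <= PH u w / (a+b)) by (unfold Rdiv; apply Rmult_le_pos; [lra | left; apply Rinv_0_lt_compat; lra]).
        split. lra. intro E. apply HP2.
        assert (E2 : PH u w / (a+b) = 0) by lra.
        assert (E3 : PH u w = PH u w / (a+b) * (a+b)) by (field; lra).
        rewrite E3, E2. ring. }
    destruct Hmain as [Hm1 Hm2].
    split. lra. intros _. split. exact Hm1. intro E.
    destruct (Hm2 E) as [E1 E2]. rewrite Hcu, Hbw, Ha', E1, E2. repeat split; field.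
Qed.

Definition Xnc (a b c : R) := c * sqrt c + Rmin (3 * hmean a b) (3 * a * sqrt b).

Lemma rmin_mono_r (x y z : R) : y <= z -> Rmin x y <= Rmin x z.
Proof. intro H. unfold Rmin. destruct (Rle_dec x y); destruct (Rle_dec x z); lra. Qed.

Lemma rmin_scale (s x z : R) : 0 < s -> Rmin (s*x) (s*z) = s * Rmin x z.
Proof. intro H. unfold Rmin. destruct (Rle_dec (s*x) (s*z)); destruct (Rle_dec x z); nra. Qed.

Lemma hmean_scale (s a b : R) : 0 < s -> hmean (s*a) (s*b) = s * hmean a b.
Proof. intro Hs. unfold hmean.
  destruct (Req_EM_T (s*a + s*b) 0) as [E|E]; destruct (Req_EM_T (a + b) 0) as [E'|E'].
  - ring.
  - exfalso. apply E'. assert (s*(a+b) = 0) by lra. apply Rmult_integral in H. lra.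
  - exfalso. apply E. rewrite <- Rmult_plus_distr_l, E'. ring.
  - field. split; [exact E'|lra].
Qed.

Lemma scale (s a b c : R) : 0 < s -> s <= 1 -> 0 <= a -> 0 <= b -> 0 <= c ->
  Xnc (s*a) (s*b) (s*c) <= s * Xnc a b c.
Proof. intros Hs Hs1 Ha Hb Hc. unfold Xnc.
  assert (Hss : sqrt s <= 1) by (rewrite <- sqrt_1; apply sqrt_le_1_alt; lra).
  assert (Hs0 : 0 <= sqrt s) by apply sqrt_pos.
  rewrite !sqrt_mult by lra.
  rewrite hmean_scale by lra.
  assert (Hsc : 0 <= sqrt c) by apply sqrt_pos.
  assert (Hsb : 0 <= sqrt b) by apply sqrt_pos.
  assert (H1 : s * c * (sqrt s * sqrt c) <= s * (c * sqrt c)).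
  { assert (0 <= s * c * sqrt c) by (apply Rmult_le_pos; [apply Rmult_le_pos|]; lra). nra. }
  assert (H2 : 3 * (s * a) * (sqrt s * sqrt b) <= s * (3 * a * sqrt b)).
  { assert (0 <= s * a * sqrt b) by (apply Rmult_le_pos; [apply Rmult_le_pos|]; lra). nra. }
  pose proof (rmin_mono_r (3 * (s * hmean a b)) _ _ H2).
  replace (3 * (s * hmean a b)) with (s * (3 * hmean a b)) in H by ring.
  replace (s * (3 * a * sqrt b)) with (s * (3 * a * sqrt b)) in H by ring.
  rewrite rmin_scale in H by lra.
  replace (3 * (s * hmean a b)) with (s * (3 * hmean a b)) by ring.
  lra.
Qed.

Lemma rmin_half (x y : R) : Rmin x y = 1/2 -> 1/2 <= x /\ 1/2 <= y.
Proof. unfold Rmin. destruct (Rle_dec x y); intro; lra. Qed.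

Lemma gfun_le (a b c : R) : gfun a b c <= Xnc a b c /\ gfun a b c <= pow32 c + 0.465.
Proof. unfold gfun, Xnc, pow32. split.
  - pose proof (Rmin_r 0.465 (Rmin (3 * hmean a b) (3 * a * sqrt b))). lra.
  - pose proof (Rmin_l 0.465 (Rmin (3 * hmean a b) (3 * a * sqrt b))). lra.
Qed.

Lemma main_le (a b c d : R) :
  0 <= a -> 0 <= b -> 0 <= c -> 0 <= d ->
  2 * a + b + c + 2 * d = 1 -> c <= a ->
  ffun a b c d <= 1/2 /\
  (ffun a b c d = 1/2 -> (a = 1/4 /\ b = 1/4 /\ c = 1/4 /\ d = 0)).
Proof.
  intros Ha Hb Hc Hd Hsum Hca.
  set (v := sqrt d).
  assert (Hv : 0 <= v) by apply sqrt_pos.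
  assert (Hdv : d = v^2) by (unfold v; simpl; rewrite Rmult_1_r, sqrt_sqrt; lra).
  assert (Hpd : pow32 d = v^3) by (unfold pow32; fold v; rewrite Hdv; ring).
  destruct (gfun_le a b c) as [Hg1 Hg2].
  set (g := gfun a b c) in *.
  assert (Hf1 : ffun a b c d <= 2 * v^3 + g) by (unfold ffun; rewrite <- Hpd; apply Rmin_l).
  assert (Hf2 : ffun a b c d <= 1/4 + 3/4 * g) by (unfold ffun; apply Rmin_r).
  assert (Hfe : ffun a b c d = 1/2 -> 1/2 <= 2 * v^3 + g /\ 1/2 <= 1/4 + 3/4*g)
    by (unfold ffun; rewrite <- Hpd; apply rmin_half).
  assert (Strict : ffun a b c d < 1/2 -> ffun a b c d <= 1/2 /\
     (ffun a b c d = 1/2 -> (a = 1/4 /\ b = 1/4 /\ c = 1/4 /\ d = 0))).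
  { intro H. split. lra. intro E. lra. }
  set (s := 2*a + b + c).
  assert (Hs : s = 1 - 2*v^2) by (unfold s; lra).
  destruct (Req_dec s 0) as [Hs0|Hs0].
  -
    apply Strict.
    assert (a = 0) by (unfold s in Hs0; lra). assert (b = 0) by (unfold s in Hs0; lra).
    assert (c = 0) by (unfold s in Hs0; lra).
    assert (HX : Xnc a b c = 0).
    { subst a b c. unfold Xnc, hmean. rewrite sqrt_0.
      destruct (Req_EM_T (0+0) 0); [|lra]. unfold Rmin. destruct (Rle_dec (3*0) (3*0*0)); ring. }
    lra.
  - assert (Hsp : 0 < s) by (unfold s in *; lra).
    assert (Hs1 : s <= 1) by nra.
    set (a' := a / s). set (b' := b / s). set (c' := c / s).
    assert (Ea : a = s * a') by (unfold a'; field; lra).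
    assert (Eb : b = s * b') by (unfold b'; field; lra).
    assert (Ec : c = s * c') by (unfold c'; field; lra).
    assert (Ha' : 0 <= a') by (unfold a'; unfold Rdiv; apply Rmult_le_pos; [lra|left; apply Rinv_0_lt_compat; lra]).
    assert (Hb' : 0 <= b') by (unfold b'; unfold Rdiv; apply Rmult_le_pos; [lra|left; apply Rinv_0_lt_compat; lra]).
    assert (Hc' : 0 <= c') by (unfold c'; unfold Rdiv; apply Rmult_le_pos; [lra|left; apply Rinv_0_lt_compat; lra]).
    assert (Hsum' : 2*a' + b' + c' = 1).
    { unfold a', b', c'. replace (2*(a/s) + b/s + c/s) with ((2*a+b+c)/s) by (field; lra).
      change (2*a+b+c) with s. field. lra. }
    assert (Hca' : c' <= a') by (apply (Rmult_le_reg_l s); [lra|]; rewrite <- Ea, <- Ec; lra).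
    destruct (core a' b' c' Ha' Hb' Hc' Hsum' Hca') as [K1 K2].
    assert (HXs : Xnc a b c <= s * Xnc a' b' c').
    { rewrite Ea, Eb, Ec at 1. apply scale; lra. }
    fold (Xnc a' b' c') in K1, K2.
    destruct (Rle_lt_dec (28/100) (sqrt c')) as [Hbig|Hsmall].
    + destruct (K2 Hbig) as [K3 K4].
      assert (Hg : g <= s/2) by nra.
      destruct (Rle_lt_dec v (1/2)) as [Hv2|Hv2].
      * split.
        -- assert (0 <= v^2 * (1 - 2*v)) by (apply Rmult_le_pos; nra). nra.
        -- intro E. destruct (Hfe E) as [E1 E2].
           assert (Hv0 : v^2 * (2*v - 1) >= 0) by nra.
           assert (Hv3 : v = 0).
           { destruct (Rle_lt_dec v 0) as [|Hvp]; [lra|].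
             assert (v = 1/2) by nra. subst v. nra. }
           assert (Hd0 : d = 0) by (rewrite Hdv, Hv3; ring).
           assert (Hs1' : s = 1) by (rewrite Hs, Hv3; ring).
           assert (Hv30 : v^3 = 0) by (rewrite Hv3; ring).
           assert (HK : Xnc a' b' c' = 1/2) by (rewrite Hs1' in HXs; lra).
           destruct (K4 HK) as [A1 [A2 A3]].
           rewrite Ea, Eb, Ec, Hs1', A1, A2, A3. repeat split; [ring|ring|ring|exact Hd0].
      * apply Strict. assert (s < 1/2) by nra. lra.
    + apply Strict.
      assert (Hg : g <= 5148/10000 * s) by nra.
      destruct (Rle_lt_dec (45/100) v) as [Hv1|Hv1].
      * assert (s <= 595/1000) by nra. lra.
      * destruct (Rle_lt_dec (18/100) v) as [Hv2|Hv2].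
        -- assert (2*v^3 + 5148/10000*(1 - 2*v^2) < 1/2).
           { assert (0 <= (v - 18/100)*(45/100 - v)) by nra. nra. }
           nra.
        -- assert (Hcc : c <= c') by (rewrite Ec; nra).
           assert (Hsc : sqrt c <= sqrt c') by (apply sqrt_le_1_alt; lra).
           assert (Hsc0 : 0 <= sqrt c) by apply sqrt_pos.
           assert (Hp3 : pow32 c = (sqrt c)^3).
           { unfold pow32. pattern c at 1. rewrite <- (sqrt_sqrt c) by lra. ring. }
           assert (pow32 c <= (28/100)^3) by (rewrite Hp3; apply pow_incr; lra).
           assert (v^3 <= (18/100)^3) by (apply pow_incr; lra).
           lra.
Qed.

Lemma point_val : ffun (1/4) (1/4) (1/4) 0 = 1/2.
Proof.
  unfold ffun, gfun, pow32, hmean. rewrite sqrt_0.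
  assert (Hq : sqrt (1/4) = 1/2) by (apply sqrt_lem_1; lra). rewrite Hq.
  destruct (Req_EM_T (1/4 + 1/4) 0) as [E|E]; [lra|].
  replace (1/4 * (1/4) / (1/4 + 1/4)) with (1/8) by field.
  unfold Rmin. repeat destruct Rle_dec; lra.
Qed.

Theorem lemma5p6 (a b c d : R) :
  0 <= a -> 0 <= b -> 0 <= c -> 0 <= d ->
  2 * a + b + c + 2 * d = 1 -> c <= a ->
  ffun a b c d <= 1/2 /\
  (ffun a b c d = 1/2 <-> (a = 1/4 /\ b = 1/4 /\ c = 1/4 /\ d = 0)).
Proof.
  intros Ha Hb Hc Hd Hs Hca.
  destruct (main_le a b c d Ha Hb Hc Hd Hs Hca) as [A B].
  split; [exact A|]. split; [exact B|].
  intros [-> [-> [-> ->]]]. exact point_val.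
Qed.
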